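(* Let $g$ be a bounded generalized spatial sign, $1\le m<d$, and fix a dataset $S=(x_1,\dots,x_n)\in(\mathbb{R}^d)^n$. Then \[ \mathrm{bp}(\mathcal{V}_m^g;S)\ge\frac{\hat\phi_{g,m}-\hat\phi_{g,m+1}}{8\|g\|_\infty^2}, \] where $\hat\phi_{g,i}$ is the $i$-th largest eigenvalue of $\widehat K_g(S)$.
   Context: A bounded generalized spatial sign is $g(t)=\xi(\|t\|_2)t/\|t\|_2$ with $\xi:(0,\infty)\to(0,\infty)$ and $\|g\|_\infty:=\sup_t\|g(t)\|_2<\infty$. For a dataset $S=(x_1,\dots,x_n)$, $\widehat K_g(S)=\frac{2}{n(n-1)}\sum_{i<j}g((x_j-x_i)/\sqrt2)g((x_j-x_i)/\sqrt2)^\top$, and $\mathcal{V}_m^g(S)$ is the column space of the $d\times m$ matrix of orthonormal eigenvectors of $\widehat K_g(S)$ for its $m$ largest eigenvalues, an element of the Grassmannian $\mathrm{Gr}(d,m)$. For a map $\mathcal{V}:(\mathbb{R}^d)^n\to\mathrm{Gr}(d,m)$, the breakdown point at $S$ is \[ \mathrm{bp}(\mathcal{V};S)=\min_{1\le r\le n}\Big\{\frac rn:\sup_{S_{r/n}}\Theta(\mathcal{V}(S_{r/n}),\mathcal{V}(S))=\frac\pi2\Big\}, \] where the supremum is over all datasets $S_{r/n}=(x_1,\dots,x_{n-r},y_1,\dots,y_r)$ with arbitrary $y_1,\dots,y_r\in\mathbb{R}^d$, and $\Theta(\mathrm{col}(V_1),\mathrm{col}(V_2))=\arccos\varrho_m$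 is the largest principal angle, $\varrho_m$ being the smallest singular value of $V_1^\top V_2$ for orthonormal bases $V_1,V_2$. *)

(* Defs.v *)
From HB Require Import structures.
From mathcomp Require Import all_boot all_order all_algebra.
From mathcomp Require Import all_classical all_reals all_analysis.
Set Implicit Arguments. Unset Strict Implicit. Unset Printing Implicit Defensive.
Import Order.TTheory GRing.Theory Num.Theory.
Local Open Scope classical_set_scope.
Local Open Scope ring_scope.

Section Defs.
Variable R : realType.

Definition norm2 {d : nat} (t : 'cV[R]_d) : R := Num.sqrt (\sum_i t i 0 ^+ 2).

Definition gsign {d : nat} (xi : R -> R) (t : 'cV[R]_d) : 'cV[R]_d :=
  if t == 0 then 0 else (xi (norm2 t) / norm2 t) *: t.

Definition gsup (d : nat) (xi : R -> R) : R :=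
  sup [set norm2 (gsign xi t) | t in [set: 'cV[R]_d]].

Definition Khat {d n : nat} (xi : R -> R) (S : 'I_n -> 'cV[R]_d) : 'M[R]_d :=
  (2 / (n%:R * (n%:R - 1))) *:
    \sum_(i < n) \sum_(j < n | (i < j)%N)
      (let u := (Num.sqrt 2)^-1 *: (S j - S i) in gsign xi u *m (gsign xi u)^T).

(* orthonormal eigendecomposition K = U diag(lam_0,...,lam_{d-1}) U^T with
   lam_0 >= lam_1 >= ... >= lam_{d-1}; lam (i-1) is the i-th largest eigenvalue *)
Definition spectral_decomp {d : nat} (K : 'M[R]_d) (U : 'M[R]_d) (lam : nat -> R) :=
  U^T *m U = 1%:M /\
  K = U *m diag_mx (\row_(i < d) lam i) *m U^T /\
  (forall i j : nat, (i <= j < d)%N -> lam j <= lam i).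

(* the column space of V is the span of the eigenvectors of K for its m largest
   eigenvalues (for some orthonormal eigenbasis) *)
Definition top_eigenspace {d m : nat} (K : 'M[R]_d) (V : 'M[R]_(d, m)) :=
  exists (U : 'M[R]_d) (lam : nat -> R), spectral_decomp K U lam /\
    (V^T == (U *m diag_mx (\row_(j < d) ((j < m)%N)%:R))^T)%MS.

Definition sigma_min {m : nat} (M : 'M[R]_m) : R :=
  Num.sqrt (inf [set a | eigenvalue (M^T *m M) a]).

(* largest principal angle between col(V1) and col(V2) (orthonormal bases) *)
Definition Theta {d m : nat} (V1 V2 : 'M[R]_(d, m)) : R :=
  acos (sigma_min (V1^T *m V2)).

Definition replaced {d n : nat} (S : 'I_n -> 'cV[R]_d) (r : nat)
  (Y : 'I_n -> 'cV[R]_d) : 'I_n -> 'cV[R]_d :=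
  fun i => if (i < n - r)%N then S i else Y i.

(* breakdown point; min over an empty set is +oo *)
Definition bp {d m n : nat} (V : ('I_n -> 'cV[R]_d) -> 'M[R]_(d, m))
  (S : 'I_n -> 'cV[R]_d) : \bar R :=
  ereal_inf [set ((r%:R / n%:R)%:E)%E | r in
    [set r : nat | (1 <= r <= n)%N /\
       sup [set Theta (V S') (V S) | S' in [set replaced S r Y | Y in [set: 'I_n -> 'cV[R]_d]]]
         = pi / 2]].

End Defs.

(* Main.v *)
Require Import Defs.
From HB Require Import structures.
From mathcomp Require Import all_boot all_order all_algebra.
From mathcomp Require Import all_classical all_reals all_analysis.
From mathcomp Require Import complex.
From mathcomp Require Import ring lra zify.
Import Order.TTheory GRing.Theory Num.Theory.
Local Open Scope classical_set_scope.
Local Open Scope ring_scope.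
Set Implicit Arguments. Unset Strict Implicit. Unset Printing Implicit Defensive.


Section E.
Variable R : rcfType.
Local Notation C := (complex.complex R).
Local Notation toC := (complex.real_complex_def (Phant R)).

Lemma Re_mulC (z : C) (x : R) : complex.Re (z * toC x) = complex.Re z * x.
Proof. by case: z => a b /=; rewrite mulr0 subr0. Qed.
Lemma Im_mulC (z : C) (x : R) : complex.Im (z * toC x) = complex.Im z * x.
Proof. by case: z => a b /=; rewrite mulr0 add0r. Qed.
Lemma Re_mul (z w : C) : complex.Re (z * w) = complex.Re z * complex.Re w - complex.Im z * complex.Im w.
Proof. by case: z; case: w. Qed.
Lemma Im_mul (z w : C) : complex.Im (z * w) = complex.Re z * complex.Im w + complex.Im z * complex.Re w.
Proof. by case: z; case: w => a b c d /=; rewrite addrC. Qed.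
Lemma Re_sum (I : finType) (F : I -> C) : complex.Re (\sum_i F i) = \sum_i complex.Re (F i).
Proof. by elim/big_rec2: _ => // i x y _ <-; case: (F i); case: y. Qed.
Lemma Im_sum (I : finType) (F : I -> C) : complex.Im (\sum_i F i) = \sum_i complex.Im (F i).
Proof. by elim/big_rec2: _ => // i x y _ <-; case: (F i); case: y. Qed.

Lemma sym_eigen m (A : 'M[R]_m.+1) : A^T = A -> exists a, eigenvalue A a.
Proof.
move=> sA.
have [z /eigenvalueP [v Hv vN0]] := @eigenvalue_closed C _ (map_mx toC A) (ltn0Sn m).
pose a := map_mx (@complex.Re R) v; pose b := map_mx (@complex.Im R) v.
pose al := complex.Re z; pose be := complex.Im z.
have Ha : a *m A = al *: a - be *: b.
  apply/rowP => k; have := congr1 (fun M : 'M[C]_(1, m.+1) => complex.Re (M 0 k)) Hv.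
  rewrite !mxE /= Re_sum Re_mul => <-; apply: eq_bigr => j _.
  by rewrite !mxE Re_mulC.
have Hb : b *m A = be *: a + al *: b.
  apply/rowP => k; have := congr1 (fun M : 'M[C]_(1, m.+1) => complex.Im (M 0 k)) Hv.
  rewrite !mxE /= Im_sum Im_mul addrC [be * _]mulrC => <-.
  apply: eq_bigr => j _.
  by rewrite !mxE Im_mulC.
have tr11 (M : 'M[R]_1) : M^T = M by apply/matrixP => i j; rewrite !ord1 mxE.
have s12 : a *m A *m b^T = b *m A *m a^T.
  by rewrite -[LHS]tr11 !trmx_mul trmxK sA mulmxA.
have ab : a *m b^T = b *m a^T by rewrite -[LHS]tr11 trmx_mul trmxK.
move: s12; rewrite Ha Hb !mulmxBl !mulmxDl -!scalemxAl ab => s12.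
have sq (w : 'rV[R]_m.+1) : (w *m w^T) 0 0 = \sum_i w 0 i ^+ 2.
  by rewrite mxE; apply: eq_bigr => i _; rewrite mxE expr2.
have Na0 : 0 <= (a *m a^T) 0 0 by rewrite sq; apply: sumr_ge0 => i _; apply: sqr_ge0.
have Nb0 : 0 <= (b *m b^T) 0 0 by rewrite sq; apply: sumr_ge0 => i _; apply: sqr_ge0.
have abn0 : (a *m a^T) 0 0 + (b *m b^T) 0 0 != 0.
  apply/negP; rewrite paddr_eq0 // => /andP[/eqP aa /eqP bb].
  move: aa bb; rewrite !sq => /psumr_eq0P aa /psumr_eq0P bb.
  case/eqP: vN0; apply/rowP => i; rewrite mxE.
  have := aa (fun i _ => sqr_ge0 _) i isT; have := bb (fun i _ => sqr_ge0 _) i isT.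
  rewrite !mxE => /eqP; rewrite sqrf_eq0 => /eqP h1 /eqP; rewrite sqrf_eq0 => /eqP h2.
  by case: (v 0 i) h1 h2 => x y /= -> ->.
move: s12 Na0 Nb0 abn0; set P := b *m a^T; set Na := a *m a^T; set Nb := b *m b^T.
clearbody P Na Nb => s12 Na0 Nb0 abn0.
have s12' := congr1 (fun M : 'M[R]_1 => M 0 0) s12.
move: s12'; rewrite /= !mxE => s12'.
have be0 : be = 0.
  apply/eqP; rewrite -(mulIr_eq0 _ (rregP abn0)); apply/eqP.
  rewrite mulrDr; lra.
move: Ha Hb; rewrite be0 !scale0r subr0 add0r => Ha Hb.
have [a0|an0] := eqVneq a 0; last by exists al; apply/eigenvalueP; exists a.
exists al; apply/eigenvalueP; exists b => //.
apply: contra vN0 => /eqP b0; apply/eqP/rowP => i.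
have := congr1 (fun M : 'rV[R]_m.+1 => M 0 i) a0.
have := congr1 (fun M : 'rV[R]_m.+1 => M 0 i) b0.
rewrite !mxE; case: (v 0 i) => x y /= -> ->; by [].
Qed.
End E.

Section LA.
Variable R : realType.

Definition dotv {d} (x y : 'cV[R]_d) : R := (x^T *m y) 0 0.
Definition qf {d} (K : 'M[R]_d) (x : 'cV[R]_d) : R := (x^T *m K *m x) 0 0.

Lemma dotvE d (x y : 'cV[R]_d) : dotv x y = \sum_i x i 0 * y i 0.
Proof. by rewrite /dotv mxE; apply: eq_bigr => i _; rewrite mxE. Qed.

Lemma dotv_ge0 d (x : 'cV[R]_d) : 0 <= dotv x x.
Proof. by rewrite dotvE; apply: sumr_ge0 => i _; rewrite -expr2 sqr_ge0. Qed.

Lemma dotv_eq0 d (x : 'cV[R]_d) : (dotv x x == 0) = (x == 0).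
Proof.
apply/idP/idP => [|/eqP->]; last by rewrite dotvE big1 // => i _; rewrite mxE mul0r.
rewrite dotvE => /eqP /psumr_eq0P h; apply/eqP/colP => i; rewrite mxE.
by apply/eqP; rewrite -sqrf_eq0 expr2 h // => j _; rewrite -expr2 sqr_ge0.
Qed.

Lemma UUt d (U : 'M[R]_d) : U^T *m U = 1%:M -> U *m U^T = 1%:M.
Proof. exact: mulmx1C. Qed.

Lemma qf_spec d (K U : 'M[R]_d) l (z : 'cV[R]_d) : spectral_decomp K U l ->
  qf K (U *m z) = \sum_(i < d) l i * z i 0 ^+ 2.
Proof.
case=> UU [KE _]; rewrite /qf KE trmx_mul !mulmxA -[z^T *m U^T *m U]mulmxA UU mulmx1.
rewrite -[_ *m U^T *m U]mulmxA UU mulmx1 mul_mx_diag mxE; apply: eq_bigr => i _.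
by rewrite !mxE expr2 mulrCA mulrA.
Qed.

Lemma dot_spec d (U : 'M[R]_d) (z : 'cV[R]_d) : U^T *m U = 1%:M ->
  dotv (U *m z) (U *m z) = dotv z z.
Proof. by move=> UU; rewrite /dotv trmx_mul -mulmxA (mulmxA U^T) UU mul1mx. Qed.

Lemma pid_col d r (c : 'cV[R]_d) i : (pid_mx r *m c) i 0 = if (i < r)%N then c i 0 else 0.
Proof.
rewrite mxE (bigD1 i) //= big1 => [|j /negbTE ji]; last first.
  by rewrite mxE (inj_eq val_inj) eq_sym ji mul0r.
by rewrite mxE eqxx /= addr0; case: ifP => _; rewrite ?mul1r ?mul0r.
Qed.

Lemma copid_col d r (c : 'cV[R]_d) i : (copid_mx r *m c) i 0 = if (i < r)%N then 0 else c i 0.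
Proof.
have := pid_col r c i; rewrite /copid_mx mulmxBl mul1mx.
move: (pid_mx r *m c) => P HP; rewrite mxE [in X in _ + X]mxE HP; case: ifP => _; lra.
Qed.

Lemma tr_copid d r : (copid_mx r : 'M[R]_d)^T = copid_mx r.
Proof. by rewrite /copid_mx linearB /= trmx1 tr_pid_mx. Qed.

Lemma CF d (K1 K2 U1 U2 : 'M[R]_d) (l1 l2 : nat -> R) (del : R) (k : nat) :
  spectral_decomp K1 U1 l1 -> spectral_decomp K2 U2 l2 ->
  (forall x, qf K1 x <= qf K2 x + del * dotv x x) -> (k < d)%N -> l1 k <= l2 k + del.
Proof.
move=> s1 s2 H kd.
have [UU1 [_ so1]] := s1; have [UU2 [_ so2]] := s2.
have [u1 _] := mulmx1_unit UU1; have [u2 _] := mulmx1_unit UU2.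
pose A1 : 'M[R]_d := pid_mx k.+1 *m U1^T. pose A2 : 'M[R]_d := copid_mx k *m U2^T.
have r1 : \rank A1 = k.+1 by rewrite mxrankMfree ?row_free_unit // rank_pid_mx.
have r2 : \rank A2 = (d - k)%N by rewrite mxrankMfree ?row_free_unit // rank_copid_mx // ltnW.
have := mxrank_sum_cap A1 A2; rewrite r1 r2.
have := rank_leq_col (A1 + A2)%MS => le s.
have capn0 : (A1 :&: A2)%MS != 0 by rewrite -mxrank_eq0; lia.
pose w := nz_row (A1 :&: A2)%MS.
have wn0 : w != 0 by rewrite nz_row_eq0.
have w1 : (w <= A1)%MS := submx_trans (nz_row_sub _) (capmxSl _ _).
have w2 : (w <= A2)%MS := submx_trans (nz_row_sub _) (capmxSr _ _).
have [c1 e1] := submxP w1; have [c2 e2] := submxP w2.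
pose z1 : 'cV[R]_d := pid_mx k.+1 *m c1^T; pose z2 : 'cV[R]_d := copid_mx k *m c2^T.
have x1 : w^T = U1 *m z1 by rewrite e1 !trmx_mul trmxK tr_pid_mx mulmxA.
have x2 : w^T = U2 *m z2 by rewrite e2 !trmx_mul trmxK tr_copid mulmxA.
have N0 : 0 < dotv w^T w^T by rewrite lt_def dotv_eq0 trmx_eq0 wn0 dotv_ge0.
have q1 : l1 k * dotv w^T w^T <= qf K1 w^T.
  have -> : dotv w^T w^T = dotv z1 z1 by rewrite x1 dot_spec.
  rewrite dotvE mulr_sumr x1 (qf_spec _ s1); apply: ler_sum => i _.
  rewrite -expr2 pid_col; case: ifP => ik; last by rewrite expr0n /= !mulr0.
  apply: (ler_wpM2r (sqr_ge0 _)); apply: so1; have := ltn_ord i; lia.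
have q2 : qf K2 w^T <= l2 k * dotv w^T w^T.
  have -> : dotv w^T w^T = dotv z2 z2 by rewrite x2 dot_spec.
  rewrite dotvE mulr_sumr x2 (qf_spec _ s2); apply: ler_sum => i _.
  rewrite -expr2 copid_col; case: ifP => ik; first by rewrite expr0n /= !mulr0.
  apply: (ler_wpM2r (sqr_ge0 _)); apply: so2; have := ltn_ord i; move: ik; lia.
have := H w^T => h.
have : l1 k * dotv w^T w^T <= (l2 k + del) * dotv w^T w^T by rewrite mulrDl; lra.
by rewrite ler_pM2r.
Qed.

Lemma diag_pid d m : diag_mx (\row_(j < d) ((j < m)%N)%:R) = pid_mx m :> 'M[R]_d.
Proof.
apply/matrixP => i j; rewrite !mxE; case: (eqVneq i j) => [->|ne].
  by rewrite eqxx andTb mulr1n.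
by rewrite mulr0n (inj_eq val_inj) (negbTE ne).
Qed.

Lemma proj_top d m (K : 'M[R]_d) (V : 'M[R]_(d, m)) : (m <= d)%N ->
  V^T *m V = 1%:M -> top_eigenspace K V ->
  exists U0 l0, spectral_decomp K U0 l0 /\ V *m V^T = U0 *m pid_mx m *m U0^T.
Proof.
move=> md VV [U0 [l0 [sd e]]]; exists U0, l0; split => //.
have [UU _] := sd.
move: e; rewrite diag_pid => /andP[s1 s2].
set E := (U0 *m (pid_mx m : 'M[R]_d))^T.
have ET : E = pid_mx m *m U0^T by rewrite /E trmx_mul tr_pid_mx.
have EE : E *m E^T = pid_mx m.
  by rewrite ET trmx_mul trmxK tr_pid_mx -mulmxA (mulmxA U0^T) UU mul1mx pid_mx_id.
have EEE : E *m E^T *m E = E by rewrite EE ET mulmxA pid_mx_id.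
move: s1 s2; rewrite -/E => s1 s2.
have [A eA] := submxP s1; have [B eB] := submxP s2.
have h1 : V^T *m (E^T *m E) = V^T by rewrite eA -mulmxA (mulmxA E) EEE.
have h2 : (E^T *m E) *m V = V.
  by have := congr1 trmx h1; rewrite !trmx_mul !trmxK.
have h3 : V *m V^T *m (E^T *m E) = V *m V^T by rewrite -mulmxA h1.
have h4 : V *m V^T *m (E^T *m E) = E^T *m E.
  by rewrite eB trmx_mul trmxK !mulmxA -(mulmxA V V^T V) VV mulmx1.
have -> : U0 *m pid_mx m *m U0^T = E^T *m E.
  by rewrite ET trmx_mul trmxK tr_pid_mx mulmxA -[U0 *m _ *m pid_mx m]mulmxA pid_mx_id.
by rewrite -h4 h3.
Qed.

Lemma qf_pid d m (y : 'cV[R]_d) :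
  (y^T *m pid_mx m *m y) 0 0 = \sum_(i < d) (if (i < m)%N then y i 0 ^+ 2 else 0).
Proof.
rewrite -mulmxA mxE; apply: eq_bigr => i _; rewrite pid_col mxE.
by case: ifP => _; rewrite ?expr2 ?mulr0.
Qed.

Lemma eig_lb d m (K K' U : 'M[R]_d) (l : nat -> R) (V V' : 'M[R]_(d,m)) (del a : R) :
  (0 < m)%N -> (m < d)%N ->
  V^T *m V = 1%:M -> V'^T *m V' = 1%:M ->
  top_eigenspace K V -> top_eigenspace K' V' -> spectral_decomp K U l ->
  (forall x, qf K' x <= qf K x + del * dotv x x) ->
  (forall x, qf K x <= qf K' x + del * dotv x x) ->
  2 * del < l m.-1 - l m ->
  eigenvalue ((V'^T *m V)^T *m (V'^T *m V)) a ->
  (l m.-1 - l m - 2 * del) / (l 0%N - l m + 2 * del) <= a /\ a <= 1.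
Proof.
move=> m0 md VV VV' tV tV' sd H1 H2 gap /eigenvalueP [w Hw wn0].
have [U0 [l0 [sd0 P0]]] := proj_top (ltnW md) VV tV.
have [U1 [l1 [sd1 P1]]] := proj_top (ltnW md) VV' tV'.
have [M hM] : {M | M = V'^T *m V} by exists (V'^T *m V).
rewrite -hM in Hw.
pose x := w^T.
have Ax : M^T *m M *m x = a *: x.
  have := congr1 trmx Hw; rewrite trmx_mul [(M^T *m M)^T]trmx_mul trmxK linearZ /=.
  by move=> h; exact: h.
pose u := V *m x.
have Nu : dotv u u = dotv x x by rewrite /u /dotv trmx_mul -mulmxA (mulmxA V^T) VV mul1mx.
have N0 : 0 < dotv x x by rewrite lt_def dotv_eq0 trmx_eq0 wn0 dotv_ge0.
pose s := dotv (V'^T *m u) (V'^T *m u).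
have aN : a * dotv x x = s.
  rewrite /s /u mulmxA -hM /dotv trmx_mul -mulmxA (mulmxA M^T) Ax -scalemxAr [RHS]mxE.
  by [].
have [UU0 [_ so0]] := sd0.
have [UU1 [_ so1]] := sd1.
have [UU [_ so]] := sd.
pose z := U0^T *m u.
have uz : u = U0 *m z by rewrite /z mulmxA UUt // mul1mx.
have Pz : pid_mx m *m z = z.
  have e : pid_mx m *m z = U0^T *m (U0 *m pid_mx m *m U0^T) *m u.
    by rewrite /z !mulmxA UU0 mul1mx.
  by rewrite e -P0 /u /z !mulmxA -(mulmxA _ V^T V) VV mulmx1.
have qK : l0 m.-1 * dotv u u <= qf K u.
  have -> : qf K u = qf K (U0 *m z) by rewrite -uz.
  have -> : dotv u u = dotv z z by rewrite uz dot_spec.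
  rewrite (qf_spec _ sd0) dotvE mulr_sumr; apply: ler_sum => i _.
  rewrite -expr2 -Pz pid_col; case: ifP => im; last by rewrite expr0n /= !mulr0.
  apply: (ler_wpM2r (sqr_ge0 _)); apply: so0; have := ltn_ord i; move: im md m0; lia.
have l0m : l m.-1 <= l0 m.-1.
  have := CF sd sd0 (del := 0) (k := m.-1); rewrite addr0; apply.
    by move=> y; rewrite mul0r addr0.
  by move: md m0; lia.
pose y := U1^T *m u.
have uy : u = U1 *m y by rewrite /y mulmxA UUt // mul1mx.
have sE : s = \sum_(i < d) (if (i < m)%N then y i 0 ^+ 2 else 0).
  rewrite -qf_pid /s /dotv trmx_mul trmxK mulmxA -(mulmxA _ V') P1 uy trmx_mul.
  rewrite !mulmxA -[y^T *m U1^T *m U1]mulmxA UU1 mulmx1.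
  by rewrite -[y^T *m pid_mx m *m U1^T *m U1]mulmxA UU1 mulmx1.
have NE : dotv u u = \sum_(i < d) y i 0 ^+ 2.
  by rewrite uy dot_spec // dotvE; apply: eq_bigr => i _; rewrite expr2.
have s0 : 0 <= s by rewrite /s dotv_ge0.
have sN : s <= dotv u u.
  rewrite sE NE; apply: ler_sum => i _; case: ifP => _ //; exact: sqr_ge0.
have qK' : qf K' u <= l1 m * dotv u u + (l1 0%N - l1 m) * s.
  have -> : qf K' u = qf K' (U1 *m y) by rewrite -uy.
  rewrite (qf_spec _ sd1) sE NE !mulr_sumr -big_split; apply: ler_sum => i _ /=.
  case: ifP => im.
    have : l1 i <= l1 0%N by apply: so1; have := ltn_ord i; lia.
    have := sqr_ge0 (y i 0); nra.
  have : l1 i <= l1 m by apply: so1; have := ltn_ord i; move: im; lia.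
  have := sqr_ge0 (y i 0); nra.
have c1 : l1 m <= l m + del by apply: (CF sd1 sd H1).
have c2 : l1 0%N <= l 0%N + del by apply: (CF sd1 sd H1); exact: leq_ltn_trans (leq0n m) md.
have c3 : l m <= l1 m + del by apply: (CF sd sd1 H2).
have c4 : l m.-1 <= l 0%N by apply: so; rewrite leq0n /=; exact: leq_ltn_trans (leq_pred m) md.
have h2 := H2 u.
have h1 := H1 u.
move: qK h1 h2 qK' sN s0; rewrite Nu -aN; move: (dotv x x) N0 => N N0 qK h1 h2 qK' sN s0.
have del0 : 0 <= del.
  have : 0 <= del * N by lra.
  by rewrite pmulr_lge0.
have Dn0 : 0 < l 0%N - l m + 2 * del by lra.
have l1d : l1 0%N - l1 m <= l 0%N - l m + 2 * del by lra.
have aN0 : 0 <= a * N by lra.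
have a0 : 0 <= a by rewrite -(pmulr_lge0 _ N0).
have k1 : l m.-1 * N <= l0 m.-1 * N by apply: ler_wpM2r => //; exact: ltW.
have k2 : (l1 0%N - l1 m) * (a * N) <= (l 0%N - l m + 2 * del) * (a * N) by apply: ler_wpM2r.
have k3 : l1 m * N <= (l m + del) * N by apply: ler_wpM2r => //; exact: ltW.
have key : (l m.-1 - l m - 2 * del) * N <= (l 0%N - l m + 2 * del) * (a * N) by lra.
split; last by rewrite -(ler_pM2r N0) mul1r.
rewrite ler_pdivrMr // -(ler_pM2r N0); lra.
Qed.

Lemma CS d (g x : 'cV[R]_d) : dotv g x ^+ 2 <= dotv g g * dotv x x.
Proof.
rewrite !dotvE.
have E1 : \sum_i \sum_j (g i 0 * x j 0 - g j 0 * x i 0) ^+ 2 =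
   \sum_i \sum_j (g i 0 * g i 0) * (x j 0 * x j 0)
 + \sum_i \sum_j (g j 0 * g j 0) * (x i 0 * x i 0)
 - 2 * \sum_i \sum_j (g i 0 * x i 0) * (g j 0 * x j 0).
  rewrite mulr_sumr -big_split -sumrB; apply: eq_bigr => i _.
  rewrite mulr_sumr -big_split -sumrB; apply: eq_bigr => j _.
  by rewrite /=; ring.
have E2 : \sum_i \sum_j (g j 0 * g j 0) * (x i 0 * x i 0) =
          \sum_i \sum_j (g i 0 * g i 0) * (x j 0 * x j 0).
  by rewrite exchange_big.
have P : 0 <= \sum_i \sum_j (g i 0 * x j 0 - g j 0 * x i 0) ^+ 2.
  by apply: sumr_ge0 => i _; apply: sumr_ge0 => j _; apply: sqr_ge0.
move: P; rewrite E1 E2 -!big_distrlr /= expr2; lra.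
Qed.

Lemma qf_add d (A B : 'M[R]_d) x : qf (A + B) x = qf A x + qf B x.
Proof. by rewrite /qf mulmxDr mulmxDl mxE. Qed.
Lemma qf_0 d (x : 'cV[R]_d) : qf 0 x = 0.
Proof. by rewrite /qf mulmx0 mul0mx mxE. Qed.
Lemma qf_scale d (A : 'M[R]_d) c x : qf (c *: A) x = c * qf A x.
Proof. by rewrite /qf -scalemxAr -scalemxAl mxE. Qed.
Lemma qf_sum d (I : finType) (P : pred I) (F : I -> 'M[R]_d) x :
  qf (\sum_(i | P i) F i) x = \sum_(i | P i) qf (F i) x.
Proof. exact: (big_morph (fun A => qf A x) (fun A B => qf_add A B x) (qf_0 x)). Qed.
Lemma qf_outer d (g x : 'cV[R]_d) : qf (g *m g^T) x = dotv g x ^+ 2.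
Proof.
rewrite /qf !mulmxA -(mulmxA (x^T *m g)) mxE big_ord1 expr2.
have -> : (x^T *m g) 0 0 = dotv g x by rewrite -/(dotv x g) !dotvE; apply: eq_bigr => i _; rewrite mulrC.
by [].
Qed.

Definition hh d n (xi : R -> R) (T : 'I_n -> 'cV[R]_d) (i j : 'I_n) :=
  gsign xi ((Num.sqrt 2)^-1 *: (T j - T i)).

Lemma Khat_qf d n xi (T : 'I_n -> 'cV[R]_d) x :
  qf (Khat xi T) x = (2 / (n%:R * (n%:R - 1))) *
     \sum_(i < n) \sum_(j < n | (i < j)%N) dotv (hh xi T i j) x ^+ 2.
Proof.
rewrite /Khat qf_scale qf_sum; congr (_ * _); apply: eq_bigr => i _.
by rewrite qf_sum; apply: eq_bigr => j _; rewrite qf_outer.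
Qed.

Lemma count_sum n r (b : R) : (r <= n)%N ->
  \sum_(j < n) (if (n - r <= j)%N then b else 0) = r%:R * b.
Proof.
move=> rn; rewrite -(big_mkord xpredT (fun j => if (n - r <= j)%N then b else 0)).
rewrite (big_cat_nat (n := n - r)) ?leq_subr //=.
rewrite big_nat_cond big1 ?add0r; last first.
  by move=> j /andP[/andP[_ jl] _]; rewrite leqNgt jl.
rewrite (eq_big_nat _ _ (F2 := fun _ => b)); last by move=> j /andP[-> _].
by rewrite sumr_const_nat subKn // mulr_natl.
Qed.

Lemma dot_gsign_le d (xi : R -> R) G (t x : 'cV[R]_d) :
  (forall t : 'cV[R]_d, norm2 (gsign xi t) <= G) ->
  0 <= dotv (gsign xi t) x ^+ 2 <= G ^+ 2 * dotv x x.
Proof.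
move=> HG; rewrite sqr_ge0 /=.
apply: le_trans (CS _ _) _; apply: ler_wpM2r; first exact: dotv_ge0.
have e : dotv (gsign xi t) (gsign xi t) = norm2 (gsign xi t) ^+ 2.
  rewrite /norm2 sqr_sqrtr ?dotvE; last by apply: sumr_ge0 => i _; apply: sqr_ge0.
  by apply: eq_bigr => i _; rewrite expr2.
have n0 : 0 <= norm2 (gsign xi t) by rewrite /norm2 sqrtr_ge0.
have := HG t; rewrite e; nra.
Qed.

Lemma Khat_diff d n xi (S Y : 'I_n -> 'cV[R]_d) r G x : (r <= n)%N ->
  (forall t : 'cV[R]_d, norm2 (gsign xi t) <= G) ->
  `|qf (Khat xi (replaced S r Y)) x - qf (Khat xi S) x| <=
    (2 / (n%:R * (n%:R - 1))) * ((n * r)%:R * (G ^+ 2 * dotv x x)).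
Proof.
move=> rn HG.
have c0 : 0 <= 2 / (n%:R * (n%:R - 1)) :> R.
  apply: divr_ge0 => //; case: n {S Y rn} => [|n]; first by rewrite mul0r.
  by apply: mulr_ge0 => //; rewrite -natr1 addrK.
rewrite !Khat_qf -mulrBr normrM ger0_norm //; apply: ler_wpM2l => //.
set b := G ^+ 2 * dotv x x.
rewrite -sumrB; apply: le_trans (ler_norm_sum _ _ _) _.
have -> : (n * r)%:R * b = \sum_(i < n) \sum_(j < n) (if (n - r <= j)%N then b else 0).
  rewrite (eq_bigr (fun _ => r%:R * b)); last by move=> i _; rewrite count_sum.
  by rewrite sumr_const card_ord /b natrM; ring.
apply: ler_sum => i _; rewrite -sumrB; apply: le_trans (ler_norm_sum _ _ _) _.
rewrite [X in _ <= X](bigID (fun j : 'I_n => (i < j)%N)) /=.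
rewrite -[X in X <= _]addr0; apply: lerD; last first.
  by apply: sumr_ge0 => j _; case: ifP => // _; rewrite /b mulr_ge0 ?sqr_ge0 ?dotv_ge0.
apply: ler_sum => j ij; case: ifP => jn.
  have := dot_gsign_le ((Num.sqrt 2)^-1 *: (replaced S r Y j - replaced S r Y i)) x HG.
  have := dot_gsign_le ((Num.sqrt 2)^-1 *: (S j - S i)) x HG.
  rewrite -/b => /andP[h1 h2] /andP[h3 h4]; rewrite ler_norml; apply/andP; split; lra.
have -> : hh xi (replaced S r Y) i j = hh xi S i j.
  rewrite /hh /replaced; move/negbT: jn; rewrite -ltnNge => jn.
  by rewrite jn (ltn_trans ij jn).
by rewrite subrr normr0.
Qed.

End LA.


Section W.
Variable R : realType.

Lemma acos_in (x : R) : -1 <= x <= 1 -> acos x \in `[0, (pi : R)].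
Proof. by move=> h; rewrite in_itv /= acos_ge0 // acos_lepi. Qed.

Lemma acos_le (x y : R) : -1 <= x -> x <= y -> y <= 1 -> acos y <= acos x.
Proof.
move=> h1 h2 h3.
have hx : -1 <= x <= 1 by apply/andP; split => //; apply: le_trans h3.
have hy : -1 <= y <= 1 by apply/andP; split => //; apply: le_trans h2.
rewrite leNgt; apply/negP => h.
by have := ltr_cos (acos_in hx) (acos_in hy); rewrite h !acosK ?in_itv //= => /esym; rewrite ltNge h2.
Qed.

Lemma acos_lt (x y : R) : -1 <= x -> x < y -> y <= 1 -> acos y < acos x.
Proof.
move=> h1 h2 h3.
have hx : -1 <= x <= 1 by apply/andP; split => //; apply: le_trans (ltW h2) h3.
have hy : -1 <= y <= 1 by apply/andP; split => //; apply: le_trans (ltW h2).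
have := ltr_cos (acos_in hy) (acos_in hx); rewrite !acosK ?in_itv //= => <-.
exact: h2.
Qed.

Lemma sym_eigen' m (A : 'M[R]_m) : (0 < m)%N -> A^T = A -> exists a, eigenvalue A a.
Proof. by case: m A => // m A _; apply: sym_eigen. Qed.

End W.


Theorem theorem10 (R : realType) (d m n : nat) (xi : R -> R)
  (Vm : ('I_n -> 'cV[R]_d) -> 'M[R]_(d, m)) (S : 'I_n -> 'cV[R]_d) :
  (forall r : R, 0 < r -> 0 < xi r) ->
  has_ubound [set norm2 (gsign xi t) | t in [set: 'cV[R]_d]] ->
  (1 <= m)%N -> (m < d)%N ->
  (forall T : 'I_n -> 'cV[R]_d,
      (Vm T)^T *m Vm T = 1%:M /\ top_eigenspace (Khat xi T) (Vm T)) ->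
  forall (U : 'M[R]_d) (lam : nat -> R), spectral_decomp (Khat xi S) U lam ->
  (((lam (m - 1)%N - lam m) / (8 * gsup d xi ^+ 2))%:E <= bp Vm S)%E.
Proof.
move=> xipos hub m1 md HV U lam sd.
set G := gsup d xi.
have HG : forall t : 'cV[R]_d, norm2 (gsign xi t) <= G.
  move=> t; apply: sup_upper_bound; last by exists t.
  by split => //; exists (norm2 (gsign xi t)); exists t.
have G0 : 0 <= G by apply: le_trans (HG 0); rewrite /norm2 sqrtr_ge0.
rewrite /bp; apply: le_ereal_inf_tmp => _ [r [/andP[r1 rn] Hsup] <-].
rewrite lee_fin subn1.
set gap := lam m.-1 - lam m.
have n0 : (0 < n)%N by apply: leq_trans rn.
have rn0 : 0 <= r%:R / n%:R :> R by apply: divr_ge0.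
case: (leP (gap / (8 * G^+2)) (r%:R / n%:R)) => // hlt.
exfalso.
have G2 : 0 < 8 * G ^+ 2.
  rewrite lt_def mulr_ge0 ?sqr_ge0 // andbT; apply/negP => /eqP e.
  by move: hlt; rewrite e invr0 mulr0; lra.
have gap0 : 0 < gap.
  have : 0 < gap / (8 * G^+2) by lra.
  by rewrite pmulr_lgt0 ?invr_gt0.
have nR : 0 < n%:R :> R by rewrite ltr0n.
have key : r%:R * (8 * G^+2) < gap * n%:R.
  move: hlt; rewrite ltr_pdivlMr // mulrAC ltr_pdivrMr //.
set del := (2 / (n%:R * (n%:R - 1))) * ((n * r)%:R * G ^+ 2).
have del0 : 0 <= del.
  apply: mulr_ge0; last by rewrite mulr_ge0 ?sqr_ge0.
  apply: divr_ge0 => //; apply: mulr_ge0 => //.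
  by rewrite subr_ge0 ler1n.
have d2 : 2 * del < gap.
  have [n1|n2] := eqVneq n 1%N.
    by rewrite /del n1 subrr mulr0 invr0 mulr0 mul0r mulr0.
  have n2' : (2 <= n)%N by move: n0 n2; lia.
  have nR2 : 2 <= n%:R :> R by rewrite (ler_nat R 2).
  have p0 : 0 < n%:R * (n%:R - 1) :> R by apply: mulr_gt0 => //; lra.
  have e : 2 * del = (4 * n%:R * (r%:R * G^+2)) / (n%:R * (n%:R - 1)).
    by rewrite /del natrM; field; lra.
  rewrite e ltr_pdivrMr //.
  have h1 : 0 <= gap * (n%:R - 2) by apply: mulr_ge0; lra.
  have h2 : 4 * (r%:R * G^+2) < gap * (n%:R - 1) by lra.
  have h3 : n%:R * (4 * (r%:R * G ^+ 2)) < n%:R * (gap * (n%:R - 1)).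
    by rewrite ltr_pM2l.
  lra.
have [VV tV] := HV S.
have so := sd.2.2.
have l0m : lam m.-1 <= lam 0%N.
  by apply: so; rewrite leq0n /=; exact: leq_ltn_trans (leq_pred m) md.
set cc := (lam m.-1 - lam m - 2 * del) / (lam 0%N - lam m + 2 * del).
have cc0 : 0 < cc by apply: divr_gt0; rewrite /gap in d2 *; lra.
have bnd : forall Y : 'I_n -> 'cV[R]_d,
    cc <= inf [set a | eigenvalue (((Vm (replaced S r Y))^T *m Vm S)^T *m
                                  ((Vm (replaced S r Y))^T *m Vm S)) a] <= 1.
  move=> Y; set S' := replaced S r Y.
  have [VV' tV'] := HV S'.
  have H1 : forall x, qf (Khat xi S') x <= qf (Khat xi S) x + del * dotv x x.
    move=> x; have := Khat_diff S Y x rn HG; rewrite -/S' => /ler_normlW.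
    have -> : 2 / (n%:R * (n%:R - 1)) * ((n * r)%:R * (G ^+ 2 * dotv x x)) = del * dotv x x.
      by rewrite /del; ring.
    lra.
  have H2 : forall x, qf (Khat xi S) x <= qf (Khat xi S') x + del * dotv x x.
    move=> x; have := Khat_diff S Y x rn HG; rewrite -/S' distrC => /ler_normlW.
    have -> : 2 / (n%:R * (n%:R - 1)) * ((n * r)%:R * (G ^+ 2 * dotv x x)) = del * dotv x x.
      by rewrite /del; ring.
    lra.
  have EB := fun a => eig_lb (a := a) m1 md VV VV' tV tV' sd H1 H2 d2.
  have [a0 Ea0] : exists a, eigenvalue (((Vm S')^T *m Vm S)^T *m ((Vm S')^T *m Vm S)) a.
    by apply: sym_eigen' => //; rewrite trmx_mul trmxK.
  have lb : lbound [set a | eigenvalue (((Vm S')^T *m Vm S)^T *m ((Vm S')^T *m Vm S)) a] cc.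
    by move=> a Ea; have [] := EB a Ea.
  apply/andP; split; first by apply: lb_le_inf => //; exists a0.
  apply: le_trans (ge_inf _ Ea0) _; first by exists cc.
  by have [] := EB a0 Ea0.
have cc1 : cc <= 1.
  by have /andP[h1 h2] := bnd S; apply: le_trans h2.
have sc0 : 0 < Num.sqrt cc by rewrite sqrtr_gt0.
have sc1 : Num.sqrt cc <= 1 by rewrite -sqrtr1 ler_sqrt.
have ub : ubound [set Theta (Vm S') (Vm S) | S' in [set replaced S r Y | Y in [set: 'I_n -> 'cV[R]_d]]]
            (acos (Num.sqrt cc)).
  move=> _ [_ [Y _ <-] <-]; rewrite /Theta /sigma_min.
  have /andP[h1 h2] := bnd Y.
  apply: acos_le; first by lra.
    by rewrite ler_sqrt //; apply: le_trans h1; exact: ltW.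
  by rewrite -sqrtr1 ler_sqrt.
have := ge_sup _ ub; rewrite Hsup => /(_ _) h.
have : acos (Num.sqrt cc) < pi / 2.
  rewrite -acos0; apply: acos_lt => //; lra.
suff : pi / 2 <= acos (Num.sqrt cc) by lra.
apply: h; exists (Theta (Vm (replaced S r S)) (Vm S)); exists (replaced S r S) => //.
Qed.
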